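(* Let a target $T$ be fixed at a point $(x_T,y_T)\in\mathbb{R}^2$, and consider a UAV with dynamics $\dot x=V\cos\psi$, $\dot y=V\sin\psi$, $\dot\psi=\omega$, $V>0$ constant. Let $r(t)$ be the distance from the UAV to $T$ and $\theta(t)\in[0,2\pi)$ the bearing angle. Let $r_d>0$ be a desired radius, let $k>\frac{1}{r_d}$, let $r_a=\sqrt{r_d^2-\frac{1}{k^2}}$, and let the control input be $$\omega=\begin{cases} k\left[V\cos\!\left(\pi-\sin^{-1}\!\left(\frac{r_a}{r(t)}\right)\right)-\dot r(t)\right], & r(t)\ge r_a,\\ 0,&\text{otherwise}.\end{cases}$$ Then, for every initial condition, $r(t)\to r_d$ and $\theta(t)\to\frac{\pi}{2}$ as $t\to\infty$.
   Context: The bearing angle $\theta(t)\in[0,2\pi)$ is the angle measured counterclockwise from the vector pointing from the UAV's current position to $T$ to the UAV's current heading $(\cos\psi,\sin\psi)$. In these variables the dynamics read $\dot r=-V\cos\theta$, $\dot\theta=\omega+\frac{V\sin\theta}{r}$. $\sin^{-1}$ is the principal arcsine. *)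

(* Defs.v *)
From Stdlib Require Import Reals.
From Coquelicot Require Import Coquelicot.
Open Scope R_scope.

Definition dist_to_target (xT yT px py : R) : R :=
  sqrt ((xT - px) ^ 2 + (yT - py) ^ 2).

(* Bearing angle in [0, 2*PI): angle measured counterclockwise from the
   line-of-sight vector u = T - p to the heading h = (cos psi, sin psi).
   cos theta = (u . h)/|u|, sin theta = (u x h)/|u|. *)
Definition bearing (xT yT px py psi : R) : R :=
  let ux := xT - px in
  let uy := yT - py in
  let r := dist_to_target xT yT px py in
  let c := (ux * cos psi + uy * sin psi) / r in
  let s := (ux * sin psi - uy * cos psi) / r in
  if Rle_dec 0 s then acos c else 2 * PI - acos c.

Definition control (V k rd r rdot : R) : R :=
  let ra := sqrt (rd ^ 2 - 1 / k ^ 2) in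
  if Rle_dec ra r then k * (V * cos (PI - asin (ra / r)) - rdot) else 0.

(* Main.v *)
Require Import Defs.
From Stdlib Require Import Reals.
From Coquelicot Require Import Coquelicot.
From Stdlib Require Import Lra Psatz Classical.
Open Scope R_scope.

Definition RD (f : R -> R) (u l : R) :=
  forall eps, 0 < eps -> exists delta, 0 < delta /\
    forall v, u < v < u + delta -> Rabs (f v - f u - l * (v - u)) <= eps * (v - u).

Lemma RD_lower f u l : RD f u l -> forall eps, 0 < eps -> exists delta, 0 < delta /\
  forall v, u < v < u + delta -> f v - f u >= (l - eps) * (v - u).
Proof.
  intros H eps He. destruct (H eps He) as [d [Hd Hv]]. exists d; split; auto.
  intros v Hv'. specialize (Hv v Hv'). apply Rabs_le_between in Hv. nra.
Qed.

Lemma cont_eps f c : continuity_pt f c -> forall e, 0 < e -> exists d, 0 < d /\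
  forall x, Rabs (x - c) < d -> Rabs (f x - f c) < e.
Proof.
  intros H e He. destruct (H e He) as [d [Hd Hx]]. exists d; split; auto.
  intros x Hxc. destruct (Req_dec x c) as [->|Hne].
  - rewrite Rminus_diag, Rabs_R0; auto.
  - apply (Hx x). split. split. exact I. auto. exact Hxc.
Qed.

Lemma ML0 (f : R -> R) s t M : s <= t ->
  (forall u, s <= u <= t -> continuity_pt f u) ->
  (forall u, s <= u < t -> exists l, RD f u l /\ M <= l) ->
  forall eps, 0 < eps -> (M - eps) * (t - s) <= f t - f s.
Proof.
  intros Hst Hc Hd eps He.
  set (P := fun w => f w - f s >= (M - eps) * (w - s)).
  set (E := fun v => s <= v <= t /\ forall w, s <= w <= v -> P w).
  assert (Es : E s).
  { split; [lra|]. intros w Hw. unfold P. replace w with s by lra. lra. }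
  assert (HB : bound E). { exists t. intros v [Hv _]. lra. }
  destruct (completeness E HB (ex_intro _ s Es)) as [c [Hub Hlub]].
  assert (Hsc : s <= c) by (apply Hub; exact Es).
  assert (Hct : c <= t). { apply Hlub. intros v [Hv _]. lra. }
  assert (Hbelow : forall w, s <= w < c -> P w).
  { intros w Hw. destruct (classic (exists v, E v /\ w < v)) as [[v [[Hv1 Hv2] Hwv]]|Hn].
    - apply Hv2; lra.
    - exfalso. assert (c <= w); [|lra]. apply Hlub. intros v Ev.
      destruct (Rle_lt_dec v w); auto. exfalso; apply Hn; eauto. }
  assert (Pc : P c).
  { destruct (Req_dec c s) as [->|Hcs].
    - unfold P. lra.
    - apply Rnot_lt_ge; intro Hlt.
      set (h := f s + (M - eps) * (c - s) - f c).
      assert (Hh : 0 < h) by (unfold h; lra).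
      destruct (cont_eps f c (Hc c ltac:(lra)) (h/2) ltac:(lra)) as [d [Hd0 Hdx]].
      set (w := Rmax s (c - Rmin (d/2) (h / (2 * (Rabs (M - eps) + 1))))).
      assert (Hm1 : 0 < Rmin (d/2) (h / (2 * (Rabs (M - eps) + 1)))).
      { apply Rmin_glb_lt. lra. apply Rdiv_lt_0_compat. lra. pose proof (Rabs_pos (M-eps)); lra. }
      assert (Hw1 : s <= w < c).
      { unfold w. split. apply Rmax_l. apply Rmax_lub_lt; lra. }
      assert (Hw2 : c - w <= Rmin (d/2) (h / (2 * (Rabs (M - eps) + 1)))).
      { unfold w. pose proof (Rmax_r s (c - Rmin (d / 2) (h / (2 * (Rabs (M - eps) + 1))))). lra. }
      pose proof (Rmin_l (d/2) (h / (2 * (Rabs (M - eps) + 1)))) as Hm2.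
      pose proof (Rmin_r (d/2) (h / (2 * (Rabs (M - eps) + 1)))) as Hm3.
      specialize (Hdx w ltac:(rewrite Rabs_minus_sym, Rabs_pos_eq; lra)).
      specialize (Hbelow w Hw1). unfold P in Hbelow.
      apply Rabs_lt_between in Hdx.
      assert (Hlin : Rabs ((M - eps) * (c - w)) <= h / 2).
      { rewrite Rabs_mult, (Rabs_pos_eq (c - w)) by lra.
        pose proof (Rabs_pos (M - eps)).
        assert (Rabs (M - eps) * (c - w) <= Rabs (M - eps) * (h / (2 * (Rabs (M - eps) + 1)))) by
          (apply Rmult_le_compat_l; lra).
        assert (Rabs (M - eps) * (h / (2 * (Rabs (M - eps) + 1))) <= h/2).
        { unfold Rdiv. rewrite Rinv_mult. 
          assert (0 < / (Rabs (M - eps) + 1)) by (apply Rinv_0_lt_compat; lra).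
          assert (Rabs (M - eps) * / (Rabs (M - eps) + 1) <= 1).
          { apply (Rmult_le_reg_r (Rabs (M - eps) + 1)). lra.
            rewrite Rmult_assoc, Rinv_l by lra. lra. }
          nra. }
        lra. }
      apply Rabs_le_between in Hlin.
      assert ((M - eps) * (w - s) = (M - eps) * (c - s) - (M - eps) * (c - w)) by ring.
      unfold h in *. lra. }
  assert (Ec : E c).
  { split; [lra|]. intros w Hw. destruct (Req_dec w c) as [->|]; auto. apply Hbelow; lra. }
  destruct (Req_dec c t) as [<-|Hne].
  - unfold P in Pc. lra.
  - exfalso. destruct (Hd c ltac:(lra)) as [l [Hl Hml]].
    destruct (RD_lower f c l Hl eps He) as [d [Hd0 Hv]].
    set (v0 := Rmin (c + d/2) t).
    assert (Hv0 : c < v0 <= t).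
    { unfold v0. split. apply Rmin_glb_lt; lra. apply Rmin_r. }
    assert (E v0).
    { split; [lra|]. intros w Hw. destruct (Rle_lt_dec w c).
      - destruct (Req_dec w c) as [->|]; auto. apply Hbelow; lra.
      - assert (w < c + d).
        { pose proof (Rmin_l (c + d/2) t). unfold v0 in Hw. lra. }
        specialize (Hv w ltac:(lra)). unfold P in Pc |- *. nra. }
    specialize (Hub v0 H). lra.
Qed.

Lemma ML (f : R -> R) s t M : s <= t ->
  (forall u, s <= u <= t -> continuity_pt f u) ->
  (forall u, s <= u < t -> exists l, RD f u l /\ M <= l) ->
  M * (t - s) <= f t - f s.
Proof.
  intros Hst Hc Hd. destruct (Req_dec s t) as [->|Hne].
  - lra.
  - apply Rnot_lt_le; intro Hlt.
    set (eps := (M * (t - s) - (f t - f s)) / (2 * (t - s))).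
    assert (He : 0 < eps) by (unfold eps; apply Rdiv_lt_0_compat; lra).
    pose proof (ML0 f s t M Hst Hc Hd eps He).
    assert (eps * (t - s) = (M * (t - s) - (f t - f s)) / 2) by (unfold eps; field; lra).
    nra.
Qed.

Lemma RD_opp f u l : RD f u l -> RD (fun v => - f v) u (- l).
Proof.
  intros H e He. destruct (H e He) as [d [Hd Hv]]. exists d; split; auto.
  intros v Hv'. specialize (Hv v Hv'). replace (- f v - - f u - - l * (v - u)) with (- (f v - f u - l * (v - u))) by ring.
  rewrite Rabs_Ropp; auto.
Qed.

Lemma ML_up (f : R -> R) s t M : s <= t ->
  (forall u, s <= u <= t -> continuity_pt f u) ->
  (forall u, s <= u < t -> exists l, RD f u l /\ l <= M) ->
  f t - f s <= M * (t - s).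
Proof.
  intros Hst Hc Hd.
  assert (H := ML (fun v => - f v) s t (- M) Hst).
  assert ((- M) * (t - s) <= - f t - - f s); [|lra].
  apply H.
  - intros u Hu. apply continuity_pt_opp. auto.
  - intros u Hu. destruct (Hd u Hu) as [l [Hl Hlm]]. exists (-l). split.
    apply RD_opp; auto. lra.
Qed.

Lemma derive_RD f u l g : is_derive f u l -> (forall v, u <= v -> f v = g v) -> RD g u l.
Proof.
  intros H Heq. apply is_derive_Reals in H.
  intros e He. destruct (H e He) as [d Hd]. exists d. split. apply cond_pos.
  intros v Hv. specialize (Hd (v - u) ltac:(lra) ltac:(rewrite Rabs_pos_eq; lra)).
  replace (u + (v - u)) with v in Hd by ring.
  rewrite <- !Heq by lra.
  assert (Hpos : 0 < v - u) by lra.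
  replace (f v - f u - l * (v - u)) with (((f v - f u) / (v - u) - l) * (v - u)) by (field; lra).
  rewrite Rabs_mult, (Rabs_pos_eq (v - u)) by lra. nra.
Qed.

Definition hatf (f : R -> R) (u w : R) v := if Rle_dec u v then f v else f u + w * (v - u).

Lemma hatf_derive f u w : RD f u w -> is_derive (hatf f u w) u w.
Proof.
  intros H. apply is_derive_Reals. intros e He.
  destruct (H (e/2) ltac:(lra)) as [d [Hd Hv]].
  exists (mkposreal d Hd). intros h Hh0 Hh. simpl in Hh.
  unfold hatf. destruct (Rle_dec u u) as [_|]; [|lra].
  destruct (Rle_dec u (u + h)) as [Hle|Hlt].
  - assert (0 < h) by (destruct (Rle_lt_or_eq _ _ Hle); [lra| exfalso; apply Hh0; lra]).
    specialize (Hv (u + h) ltac:(split; [lra| apply Rabs_lt_between in Hh; lra])).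
    replace (u + h - u) with h in Hv by ring.
    replace ((f (u + h) - f u) / h - w) with ((f (u + h) - f u - w * h) / h) by (field; lra).
    unfold Rdiv. rewrite Rabs_mult, Rabs_inv, (Rabs_pos_eq h) by lra.
    apply (Rmult_lt_reg_r h). lra. rewrite Rmult_assoc, Rinv_l by lra. nra.
  - replace ((f u + w * (u + h - u) - f u) / h - w) with 0 by (field; auto).
    rewrite Rabs_R0; auto.
Qed.

Lemma hatf_eq f u w v : u <= v -> hatf f u w v = f v.
Proof. intros H. unfold hatf. destruct (Rle_dec u v); auto; lra. Qed.

Lemma RD_of_int (psi g : R -> R) u w :
  (forall v, u < v -> ex_RInt g u v /\ psi v - psi u = RInt g u v) ->
  (forall e, 0 < e -> exists d, 0 < d /\ forall z, u < z < u + d -> Rabs (g z - w) <= e) ->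
  RD psi u w.
Proof.
  intros Hint Hg e He. destruct (Hg e He) as [d [Hd Hz]]. exists d; split; auto.
  intros v Hv. destruct (Hint v ltac:(lra)) as [Hex Heq]. rewrite Heq.
  assert (H1 : RInt g u v <= RInt (fun _ => w + e) u v).
  { apply RInt_le. lra. auto. apply ex_RInt_const. intros z Hz'.
    specialize (Hz z ltac:(lra)). apply Rabs_le_between in Hz. lra. }
  assert (H2 : RInt (fun _ => w - e) u v <= RInt g u v).
  { apply RInt_le. lra. apply ex_RInt_const. auto. intros z Hz'.
    specialize (Hz z ltac:(lra)). apply Rabs_le_between in Hz. lra. }
  rewrite !RInt_const in H1, H2. unfold scal in H1, H2; simpl in H1, H2.
  unfold mult in H1, H2; simpl in H1, H2.
  apply Rabs_le_between. nra.
Qed.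

Lemma cp_plus f g x : continuity_pt f x -> continuity_pt g x -> continuity_pt (fun t => f t + g t) x.
Proof. intros; exact (continuity_pt_plus f g x H H0). Qed.
Lemma cp_minus f g x : continuity_pt f x -> continuity_pt g x -> continuity_pt (fun t => f t - g t) x.
Proof. intros; exact (continuity_pt_minus f g x H H0). Qed.
Lemma cp_mult f g x : continuity_pt f x -> continuity_pt g x -> continuity_pt (fun t => f t * g t) x.
Proof. intros; exact (continuity_pt_mult f g x H H0). Qed.
Lemma cp_div f g x : continuity_pt f x -> continuity_pt g x -> g x <> 0 -> continuity_pt (fun t => f t / g t) x.
Proof. intros; exact (continuity_pt_div f g x H H0 H1). Qed.
Lemma cp_comp f g x : continuity_pt f x -> continuity_pt g (f x) -> continuity_pt (fun t => g (f t)) x.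
Proof. intros; exact (continuity_pt_comp f g x H H0). Qed.
Lemma cp_const c x : continuity_pt (fun _ => c) x.
Proof. apply continuity_pt_const. intros ? ?; auto. Qed.
Lemma cp_id x : continuity_pt (fun t => t) x.
Proof. apply derivable_continuous_pt, derivable_pt_id. Qed.
Lemma cp_pow f n x : continuity_pt f x -> continuity_pt (fun t => f t ^ n) x.
Proof. intros H. apply (cp_comp f (fun z => z ^ n)); auto. apply derivable_continuous_pt, derivable_pt_pow. Qed.
Lemma cp_cos f x : continuity_pt f x -> continuity_pt (fun t => cos (f t)) x.
Proof. intros H. apply (cp_comp f cos); auto. apply continuity_cos. Qed.
Lemma cp_sin f x : continuity_pt f x -> continuity_pt (fun t => sin (f t)) x.
Proof. intros H. apply (cp_comp f sin); auto. apply continuity_sin. Qed.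
Lemma cp_abs f x : continuity_pt f x -> continuity_pt (fun t => Rabs (f t)) x.
Proof. intros H. apply (cp_comp f Rabs); auto. apply Rcontinuity_abs. Qed.
Lemma cp_sqrt f x : continuity_pt f x -> 0 <= f x -> continuity_pt (fun t => sqrt (f t)) x.
Proof. intros H H0. apply (cp_comp f sqrt); auto. apply continuity_pt_sqrt; auto. Qed.

Lemma deriv_cont f x l : is_derive f x l -> continuity_pt f x.
Proof. intros H. apply is_derive_Reals in H. apply derivable_continuous_pt. exists l; auto. Qed.

Lemma sqrt_eq_of a b : 0 <= b -> b ^ 2 = a -> sqrt a = b.
Proof. intros Hb H. rewrite <- H. apply sqrt_pow2; auto. Qed.

Section Main.
Variables xT yT V rd k : R.
Variables x y psi : R -> R.
Hypothesis HV : 0 < V.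
Hypothesis Hrd : 0 < rd.
Hypothesis Hk : 1 / rd < k.
Hypothesis Hx : forall t, 0 < t -> is_derive x t (V * cos (psi t)).
Hypothesis Hy : forall t, 0 < t -> is_derive y t (V * sin (psi t)).

Definition rr t := dist_to_target xT yT (x t) (y t).
Hypothesis Hpsi : forall t, 0 <= t ->
     is_RInt (fun s => control V k rd (rr s) (Derive rr s)) 0 t (psi t - psi 0).

Definition ra := sqrt (rd ^ 2 - 1 / k ^ 2).
Definition A t := (xT - x t) * cos (psi t) + (yT - y t) * sin (psi t).
Definition D t := (xT - x t) * sin (psi t) - (yT - y t) * cos (psi t).
Definition rho t := (xT - x t) ^ 2 + (yT - y t) ^ 2.
Definition qf z := sqrt ((z - ra ^ 2 + Rabs (z - ra ^ 2)) / 2).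
Definition Gf t := k * V * (A t - qf (rho t)) / rr t.
Definition g t := control V k rd (rr t) (Derive rr t).

Lemma k_pos : 0 < k.
Proof. assert (0 < 1 / rd) by (apply Rdiv_lt_0_compat; lra). lra. Qed.

Lemma krd : 1 < k * rd.
Proof.
  pose proof k_pos. apply (Rmult_lt_compat_r rd) in Hk; auto.
  unfold Rdiv in Hk. rewrite Rmult_assoc, Rinv_l, Rmult_1_r in Hk; lra.
Qed.

Lemma ra2 : ra ^ 2 = rd ^ 2 - 1 / k ^ 2.
Proof.
  unfold ra. rewrite pow2_sqrt; auto. pose proof krd. pose proof k_pos.
  assert (1 / k ^ 2 < rd ^ 2); [|lra].
  apply (Rmult_lt_reg_r (k^2)). nra. unfold Rdiv. rewrite Rmult_assoc, Rinv_l by nra. nra.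
Qed.

Lemma ra_pos : 0 < ra.
Proof.
  unfold ra. apply sqrt_lt_R0. pose proof ra2. unfold ra in H. rewrite pow2_sqrt in H.
  - pose proof krd. pose proof k_pos.
    assert (1 / k ^ 2 < rd ^ 2); [|lra].
    apply (Rmult_lt_reg_r (k^2)). nra. unfold Rdiv. rewrite Rmult_assoc, Rinv_l by nra. nra.
  - pose proof krd. pose proof k_pos.
    assert (1 / k ^ 2 < rd ^ 2); [|lra].
    apply (Rmult_lt_reg_r (k^2)). nra. unfold Rdiv. rewrite Rmult_assoc, Rinv_l by nra. nra.
Qed.

Lemma rr_sqrt t : rr t = sqrt (rho t).
Proof. reflexivity. Qed.

Lemma rho_AD t : rho t = A t ^ 2 + D t ^ 2.
Proof.
  unfold rho, A, D. pose proof (sin2_cos2 (psi t)) as H. unfold Rsqr in H.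
  transitivity (((xT - x t)^2 + (yT - y t)^2) * (sin (psi t) * sin (psi t) + cos (psi t) * cos (psi t))).
  rewrite H; ring. ring.
Qed.

Lemma rho_nonneg t : 0 <= rho t.
Proof. unfold rho. apply Rplus_le_le_0_compat; apply pow2_ge_0. Qed.

Lemma rr_nonneg t : 0 <= rr t.
Proof. rewrite rr_sqrt. apply sqrt_pos. Qed.

Lemma rr2 t : rr t ^ 2 = rho t.
Proof. rewrite rr_sqrt. apply pow2_sqrt, rho_nonneg. Qed.

Lemma A_le t : Rabs (A t) <= rr t.
Proof.
  rewrite <- (Rabs_pos_eq (rr t) (rr_nonneg t)). apply Rsqr_le_abs_0.
  unfold Rsqr. pose proof (rr2 t) as H. rewrite rho_AD in H.
  pose proof (pow2_ge_0 (A t)). pose proof (pow2_ge_0 (D t)). simpl in *. lra.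
Qed.

Lemma D_le t : Rabs (D t) <= rr t.
Proof.
  rewrite <- (Rabs_pos_eq (rr t) (rr_nonneg t)). apply Rsqr_le_abs_0.
  unfold Rsqr. pose proof (rr2 t) as H. rewrite rho_AD in H.
  pose proof (pow2_ge_0 (A t)). pose proof (pow2_ge_0 (D t)). simpl in *. lra.
Qed.

Lemma qf_ge z : ra ^ 2 <= z -> qf z = sqrt (z - ra ^ 2).
Proof. intros H. unfold qf. rewrite Rabs_pos_eq by lra. f_equal. lra. Qed.

Lemma qf_le z : z <= ra ^ 2 -> qf z = 0.
Proof. intros H. unfold qf. rewrite Rabs_left1 by lra. replace ((z - ra ^ 2 + - (z - ra ^ 2)) / 2) with 0 by lra. apply sqrt_0. Qed.

Lemma qf_nonneg z : 0 <= qf z.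
Proof. apply sqrt_pos. Qed.

Lemma qf_sq z : qf z ^ 2 = Rmax (z - ra ^ 2) 0.
Proof.
  destruct (Rle_dec (ra ^ 2) z).
  - rewrite qf_ge by auto. rewrite pow2_sqrt by lra. rewrite Rmax_left; lra.
  - rewrite qf_le by lra. rewrite Rmax_right; lra.
Qed.

Lemma qf_le_sqrt z : 0 <= z -> qf z <= sqrt z.
Proof.
  intros Hz. destruct (Rle_dec (ra ^ 2) z).
  - rewrite qf_ge by auto. apply sqrt_le_1; pose proof ra_pos; nra.
  - rewrite qf_le by lra. apply sqrt_pos.
Qed.


Lemma x_cont t : 0 < t -> continuity_pt x t.
Proof. intros H. exact (deriv_cont _ _ _ (Hx t H)). Qed.
Lemma y_cont t : 0 < t -> continuity_pt y t.
Proof. intros H. exact (deriv_cont _ _ _ (Hy t H)). Qed.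

Lemma rho_derive t : 0 < t -> is_derive rho t (-2 * V * A t).
Proof.
  intros Ht. unfold rho. auto_derive.
  - split; [exists (V * cos (psi t)); apply Hx; auto|].
    split; [exists (V * sin (psi t)); apply Hy; auto| auto].
  - replace (Derive (fun x0 => x x0) t) with (V * cos (psi t)) by (symmetry; apply is_derive_unique; apply Hx; auto).
    replace (Derive (fun x0 => y x0) t) with (V * sin (psi t)) by (symmetry; apply is_derive_unique; apply Hy; auto).
    unfold A. ring.
Qed.

Lemma rr_derive t : 0 < t -> 0 < rho t -> is_derive rr t (- V * A t / rr t).
Proof.
  intros Ht Hr. apply (is_derive_ext (fun t => sqrt (rho t))). { intros; reflexivity. }
  replace (- V * A t / rr t) with ((-2 * V * A t) / (2 * sqrt (rho t))).
  - apply is_derive_sqrt; auto. apply rho_derive; auto.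
  - rewrite <- rr_sqrt. assert (0 < rr t) by (rewrite rr_sqrt; apply sqrt_lt_R0; auto). field. lra.
Qed.

Lemma g_eq t : 0 < t -> ra <= rr t -> g t = Gf t.
Proof.
  intros Ht Hra. pose proof ra_pos as Hra0.
  assert (Hr : 0 < rr t) by lra.
  assert (Hrho : 0 < rho t) by (rewrite <- rr2; nra).
  unfold g, control. cbv zeta. fold ra.
  destruct (Rle_dec ra (rr t)) as [_|]; [|lra].
  rewrite (is_derive_unique _ _ _ (rr_derive t Ht Hrho)).
  rewrite Rtrigo_facts.cos_pi_minus.
  assert (Hz : 0 <= ra / rr t <= 1).
  { split. apply Rdiv_le_0_compat; lra. apply (Rmult_le_reg_r (rr t)); auto.
    unfold Rdiv; rewrite Rmult_assoc, Rinv_l by lra; lra. }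
  rewrite cos_asin by lra.
  assert (Hq : sqrt (1 - (ra / rr t)²) = qf (rho t) / rr t).
  { apply sqrt_eq_of. apply Rdiv_le_0_compat; auto. apply qf_nonneg.
    rewrite <- rr2. rewrite qf_ge by nra.
    unfold Rdiv. rewrite Rpow_mult_distr, pow2_sqrt by nra. unfold Rsqr. field. lra. }
  rewrite Hq. unfold Gf. field. lra.
Qed.

Lemma g_zero t : rr t < ra -> g t = 0.
Proof.
  intros H. unfold g, control. cbv zeta. fold ra.
  destruct (Rle_dec ra (rr t)); [lra|auto].
Qed.

Lemma Gf_bound t : Rabs (Gf t) <= 2 * k * V.
Proof.
  pose proof k_pos. unfold Gf.
  destruct (Req_dec (rr t) 0) as [H0|H0].
  - rewrite H0. unfold Rdiv. rewrite Rinv_0, Rmult_0_r, Rabs_R0. nra.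
  - assert (Hr : 0 < rr t) by (pose proof (rr_nonneg t); lra).
    pose proof (A_le t). pose proof (qf_le_sqrt (rho t) (rho_nonneg t)). rewrite <- rr_sqrt in H2.
    pose proof (qf_nonneg (rho t)).
    unfold Rdiv. rewrite Rabs_mult, Rabs_inv, (Rabs_pos_eq (rr t)) by lra.
    rewrite Rabs_mult, (Rabs_pos_eq (k * V)) by nra.
    apply (Rmult_le_reg_r (rr t)); auto. rewrite Rmult_assoc, Rinv_l, Rmult_1_r by lra.
    assert (Rabs (A t - qf (rho t)) <= 2 * rr t).
    { apply Rabs_le_between. apply Rabs_le_between in H1. lra. }
    assert (0 < k * V) by nra. nra.
Qed.

Lemma g_bound t : 0 < t -> Rabs (g t) <= 2 * k * V.
Proof.
  intros Ht. destruct (Rle_dec ra (rr t)).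
  - rewrite g_eq; auto. apply Gf_bound.
  - rewrite g_zero by lra. rewrite Rabs_R0. pose proof k_pos. nra.
Qed.

Lemma psi_int u v : 0 <= u <= v -> ex_RInt g u v /\ psi v - psi u = RInt g u v.
Proof.
  intros Huv.
  assert (Hv : is_RInt g 0 v (psi v - psi 0)) by (apply Hpsi; lra).
  assert (Hu : is_RInt g 0 u (psi u - psi 0)) by (apply Hpsi; lra).
  assert (Ev : ex_RInt g 0 v) by (eexists; eauto).
  assert (Eu : ex_RInt g 0 u) by (eexists; eauto).
  assert (Euv : ex_RInt g u v) by (apply (ex_RInt_Chasles_2 g 0 u v); auto; lra).
  split; auto.
  pose proof (RInt_Chasles g 0 u v Eu Euv).
  rewrite (is_RInt_unique _ _ _ _ Hv), (is_RInt_unique _ _ _ _ Hu) in H.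
  unfold plus in H; simpl in H. lra.
Qed.

Lemma psi_lip u v : 0 < u <= v -> Rabs (psi v - psi u) <= 2 * k * V * (v - u).
Proof.
  intros Huv. destruct (psi_int u v ltac:(lra)) as [E Heq]. rewrite Heq.
  rewrite Rmult_comm. apply abs_RInt_le_const; auto. lra.
  intros t Ht. apply g_bound. lra.
Qed.

Lemma psi_cont t : 0 < t -> continuity_pt psi t.
Proof.
  intros Ht. apply continuity_pt_locally. intros e.
  pose proof k_pos.
  assert (Hd : 0 < Rmin (t / 2) (e / (2 * k * V + 1))).
  { apply Rmin_glb_lt. lra. apply Rdiv_lt_0_compat. apply cond_pos. nra. }
  exists (mkposreal _ Hd). intros z Hz. simpl in Hz.
  change (Rabs (z - t) < Rmin (t / 2) (e / (2 * k * V + 1))) in Hz.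
  pose proof (Rmin_l (t / 2) (e / (2 * k * V + 1))).
  pose proof (Rmin_r (t / 2) (e / (2 * k * V + 1))).
  assert (Hb : Rabs (psi z - psi t) <= 2 * k * V * Rabs (z - t)).
  { apply Rabs_lt_between in Hz. destruct (Rle_dec t z).
    - rewrite (Rabs_pos_eq (z - t)) by lra. apply psi_lip. lra.
    - rewrite (Rabs_minus_sym (psi z)), (Rabs_left (z - t)) by lra. replace (- (z - t)) with (t - z) by ring.
      apply psi_lip. lra. }
  assert (Hlt : Rabs (z - t) < e / (2 * k * V + 1)) by lra.
  assert (0 < k * V) by nra.
  assert (2 * k * V * Rabs (z - t) <= 2 * k * V * (e / (2 * k * V + 1))).
  { apply Rmult_le_compat_l. nra. lra. }
  assert (2 * k * V * (e / (2 * k * V + 1)) < e).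
  { apply (Rmult_lt_reg_r (2 * k * V + 1)). nra.
    replace (2 * k * V * (e / (2 * k * V + 1)) * (2 * k * V + 1)) with (2 * k * V * e) by (field; nra).
    pose proof (cond_pos e). nra. }
  lra.
Qed.

Lemma cos_psi_cont t : 0 < t -> continuity_pt (fun v => cos (psi v)) t.
Proof. intros; apply cp_cos, psi_cont; auto. Qed.
Lemma sin_psi_cont t : 0 < t -> continuity_pt (fun v => sin (psi v)) t.
Proof. intros; apply cp_sin, psi_cont; auto. Qed.
Lemma ux_cont t : 0 < t -> continuity_pt (fun v => xT - x v) t.
Proof. intros; apply cp_minus. apply cp_const. apply x_cont; auto. Qed.
Lemma uy_cont t : 0 < t -> continuity_pt (fun v => yT - y v) t.
Proof. intros; apply cp_minus. apply cp_const. apply y_cont; auto. Qed.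

Lemma A_cont t : 0 < t -> continuity_pt A t.
Proof.
  intros Ht. unfold A. apply cp_plus; apply cp_mult; auto using ux_cont, uy_cont, cos_psi_cont, sin_psi_cont.
Qed.
Lemma D_cont t : 0 < t -> continuity_pt D t.
Proof.
  intros Ht. unfold D. apply cp_minus; apply cp_mult; auto using ux_cont, uy_cont, cos_psi_cont, sin_psi_cont.
Qed.
Lemma rho_cont t : 0 < t -> continuity_pt rho t.
Proof. intros Ht. unfold rho. apply cp_plus; apply cp_pow; auto using ux_cont, uy_cont. Qed.
Lemma rr_cont t : 0 < t -> continuity_pt rr t.
Proof.
  intros Ht. apply (continuity_pt_ext (fun v => sqrt (rho v))). { intros; reflexivity. }
  apply cp_sqrt. apply rho_cont; auto. apply rho_nonneg.
Qed.
Lemma qf_cont_comp f t : continuity_pt f t -> continuity_pt (fun v => qf (f v)) t.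
Proof.
  intros H. unfold qf. apply cp_sqrt.
  - apply cp_div. apply cp_plus. apply cp_minus; auto. apply cp_const.
    apply cp_abs. apply cp_minus; auto. apply cp_const. apply cp_const. lra.
  - pose proof (Rle_abs (- (f t - ra ^ 2))). rewrite Rabs_Ropp in H0. lra.
Qed.
Lemma Gf_cont t : 0 < t -> 0 < rr t -> continuity_pt Gf t.
Proof.
  intros Ht Hr. unfold Gf. apply cp_div.
  - apply cp_mult. apply cp_const. apply cp_minus. apply A_cont; auto. apply qf_cont_comp, rho_cont; auto.
  - apply rr_cont; auto.
  - lra.
Qed.


Lemma psi_int' u v : 0 < u -> u < v -> ex_RInt g u v /\ psi v - psi u = RInt g u v.
Proof. intros; apply psi_int; lra. Qed.

Lemma RD_psi u : 0 < u -> exists w, RD psi u w /\ (w = Gf u \/ (w = 0 /\ rr u <= ra)).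
Proof.
  intros Hu. pose proof ra_pos as Hra.
  destruct (Rtotal_order ra (rr u)) as [Hgt|[Heq|Hlt]].
  - exists (Gf u). split; auto. apply (RD_of_int psi g). intros v Hv; apply psi_int'; auto.
    intros e He.
    destruct (cont_eps rr u (rr_cont u Hu) (rr u - ra) ltac:(lra)) as [d1 [Hd1 H1]].
    destruct (cont_eps Gf u (Gf_cont u Hu ltac:(lra)) e He) as [d2 [Hd2 H2]].
    exists (Rmin d1 d2). split. apply Rmin_glb_lt; auto.
    intros z Hz. pose proof (Rmin_l d1 d2). pose proof (Rmin_r d1 d2).
    assert (Hzu : Rabs (z - u) < Rmin d1 d2) by (rewrite Rabs_pos_eq; lra).
    specialize (H1 z ltac:(lra)). specialize (H2 z ltac:(lra)).
    apply Rabs_lt_between in H1.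
    rewrite g_eq by lra. lra.
  - assert (Hrho : 0 < rho u) by (rewrite <- rr2; rewrite <- Heq; nra).
    assert (HRD : RD rr u (- V * A u / rr u)).
    { apply (derive_RD rr u (- V * A u / rr u) rr). apply rr_derive; auto. auto. }
    destruct (Rtotal_order (A u) 0) as [Aneg|[A0|Apos]].
    + exists (Gf u). split; auto. apply (RD_of_int psi g). intros v Hv; apply psi_int'; auto.
      intros e He. set (l := - V * A u / rr u).
      assert (Hl : 0 < l).
      { unfold l. apply Rdiv_lt_0_compat. nra. lra. }
      destruct (HRD (l/2) ltac:(lra)) as [d1 [Hd1 H1]].
      destruct (cont_eps Gf u (Gf_cont u Hu ltac:(lra)) e He) as [d2 [Hd2 H2]].
      exists (Rmin d1 d2). split. apply Rmin_glb_lt; auto.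
      intros z Hz. pose proof (Rmin_l d1 d2). pose proof (Rmin_r d1 d2).
      assert (Hzu : Rabs (z - u) < Rmin d1 d2) by (rewrite Rabs_pos_eq; lra).
      specialize (H1 z ltac:(lra)). specialize (H2 z ltac:(lra)).
      apply Rabs_le_between in H1. fold l in H1.
      assert (ra < rr z) by nra.
      rewrite g_eq by lra. lra.
    + exists (Gf u). split; auto. apply (RD_of_int psi g). intros v Hv; apply psi_int'; auto.
      assert (HG0 : Gf u = 0).
      { unfold Gf. rewrite A0, qf_le by (rewrite <- rr2, <- Heq; lra). unfold Rdiv. ring. }
      intros e He.
      destruct (cont_eps Gf u (Gf_cont u Hu ltac:(lra)) e He) as [d2 [Hd2 H2]].
      exists d2. split; auto. intros z Hz.
      specialize (H2 z ltac:(rewrite Rabs_pos_eq; lra)).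
      rewrite HG0 in *. destruct (Rle_dec ra (rr z)).
      * rewrite g_eq by lra. rewrite Rminus_0_r in *. lra.
      * rewrite g_zero by lra. rewrite Rminus_0_r, Rabs_R0. lra.
    + exists 0. split; [|right; split; auto; lra]. apply (RD_of_int psi g). intros v Hv; apply psi_int'; auto.
      intros e He. set (l := - V * A u / rr u).
      assert (Hl : l < 0).
      { unfold l, Rdiv. assert (0 < / rr u) by (apply Rinv_0_lt_compat; lra). assert (0 < V * A u) by nra. nra. }
      destruct (HRD (-l/2) ltac:(lra)) as [d1 [Hd1 H1]].
      exists d1. split; auto. intros z Hz. specialize (H1 z Hz).
      apply Rabs_le_between in H1. fold l in H1.
      assert (rr z < ra) by nra.
      rewrite g_zero by lra. rewrite Rminus_0_r, Rabs_R0. lra.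
  - exists 0. split; [|right; split; auto; lra]. apply (RD_of_int psi g). intros v Hv; apply psi_int'; auto.
    intros e He.
    destruct (cont_eps rr u (rr_cont u Hu) (ra - rr u) ltac:(lra)) as [d1 [Hd1 H1]].
    exists d1. split; auto. intros z Hz.
    specialize (H1 z ltac:(rewrite Rabs_pos_eq; lra)). apply Rabs_lt_between in H1.
    rewrite g_zero by lra. rewrite Rminus_0_r, Rabs_R0. lra.
Qed.


Definition phi z := qf z / (2 * sqrt (qf z ^ 2 + ra ^ 2)).
Definition Phi z := RInt phi (ra ^ 2) z.

Lemma phi_cont z : continuity_pt phi z.
Proof.
  pose proof ra_pos. unfold phi. apply cp_div.
  - apply qf_cont_comp, cp_id.
  - apply cp_mult. apply cp_const. apply cp_sqrt. apply cp_plus. apply cp_pow, qf_cont_comp, cp_id.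
    apply cp_const. pose proof (pow2_ge_0 (qf z)). nra.
  - assert (0 < sqrt (qf z ^ 2 + ra ^ 2)); [|lra]. apply sqrt_lt_R0.
    pose proof (pow2_ge_0 (qf z)). nra.
Qed.

Lemma phi_ex a b : ex_RInt phi a b.
Proof.
  apply (ex_RInt_continuous (V := R_CompleteNormedModule)). intros z _. apply continuity_pt_filterlim, phi_cont.
Qed.

Lemma Phi_derive z : is_derive Phi z (phi z).
Proof.
  apply is_derive_RInt with (a := ra ^ 2).
  - apply filter_forall. intros b. apply RInt_correct, phi_ex.
  - apply continuity_pt_filterlim, phi_cont.
Qed.

Lemma Phi_cont z : continuity_pt Phi z.
Proof. exact (deriv_cont _ _ _ (Phi_derive z)). Qed.

Lemma phi_nonneg z : 0 <= phi z.
Proof.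
  unfold phi. apply Rdiv_le_0_compat. apply qf_nonneg. pose proof ra_pos.
  assert (0 < sqrt (qf z ^ 2 + ra ^ 2)); [|lra]. apply sqrt_lt_R0.
  pose proof (pow2_ge_0 (qf z)). nra.
Qed.

Lemma phi_eq t : 2 * phi (rho t) = qf (rho t) / rr t.
Proof.
  pose proof ra_pos. unfold phi.
  destruct (Rle_dec (ra ^ 2) (rho t)).
  - rewrite qf_ge by auto. rewrite pow2_sqrt by lra.
    replace (rho t - ra ^ 2 + ra ^ 2) with (rho t) by ring. rewrite <- rr_sqrt.
    assert (0 < rr t). { rewrite rr_sqrt. apply sqrt_lt_R0. nra. }
    field. lra.
  - rewrite qf_le by lra. unfold Rdiv. ring.
Qed.

Definition Lf (eta : R) t := D t - k * Phi (rho t) - eta * A t ^ 3.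

Lemma Lf_cont eta t : 0 < t -> continuity_pt (Lf eta) t.
Proof.
  intros Ht. unfold Lf. apply cp_minus. apply cp_minus. apply D_cont; auto.
  apply cp_mult. apply cp_const. apply (cp_comp rho Phi). apply rho_cont; auto. apply Phi_cont.
  apply cp_mult. apply cp_const. apply cp_pow. apply A_cont; auto.
Qed.

Lemma RD_all u w : 0 < u -> RD psi u w ->
  RD A u (- V - D u * w) /\ RD D u (A u * w) /\
  forall eta, RD (Lf eta) u (A u * w + k * V * A u * (qf (rho u) / rr u) - eta * (3 * A u ^ 2 * (- V - D u * w))).
Proof.
  intros Hu Hw.
  set (ph := hatf psi u w).
  assert (Hph : is_derive ph u w) by (apply hatf_derive; auto).
  assert (Hphu : ph u = psi u) by (apply hatf_eq; lra).
  set (Ah := fun v => (xT - x v) * cos (ph v) + (yT - y v) * sin (ph v)).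
  set (Dh := fun v => (xT - x v) * sin (ph v) - (yT - y v) * cos (ph v)).
  assert (Dx : Derive (fun x0 => x x0) u = V * cos (psi u)) by (apply is_derive_unique; apply Hx; auto).
  assert (Dy : Derive (fun x0 => y x0) u = V * sin (psi u)) by (apply is_derive_unique; apply Hy; auto).
  assert (Dp : Derive (fun x0 => ph x0) u = w) by (apply is_derive_unique; auto).
  assert (Ex : ex_derive x u) by (eexists; apply Hx; auto).
  assert (Ey : ex_derive y u) by (eexists; apply Hy; auto).
  assert (Ep : ex_derive ph u) by (eexists; eauto).
  assert (HA : is_derive Ah u (- V - D u * w)).
  { unfold Ah. auto_derive. tauto. rewrite Dx, Dy, Dp, Hphu. unfold D.
    pose proof (sin2_cos2 (psi u)) as H. unfold Rsqr in H.
    transitivity (- V * (sin (psi u) * sin (psi u) + cos (psi u) * cos (psi u)) -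
       ((xT - x u) * sin (psi u) - (yT - y u) * cos (psi u)) * w); [ring|]. rewrite H. ring. }
  assert (HD : is_derive Dh u (A u * w)).
  { unfold Dh. auto_derive. tauto. rewrite Dx, Dy, Dp, Hphu. unfold A. ring. }
  assert (EA : forall v, u <= v -> Ah v = A v).
  { intros v Hv. unfold Ah, A, ph. rewrite hatf_eq; auto. }
  assert (ED : forall v, u <= v -> Dh v = D v).
  { intros v Hv. unfold Dh, D, ph. rewrite hatf_eq; auto. }
  split; [apply (derive_RD Ah u _ A); auto|].
  split; [apply (derive_RD Dh u _ D); auto|].
  intros eta.
  apply (derive_RD (fun v => Dh v - k * Phi (rho v) - eta * Ah v ^ 3) u _ (Lf eta)).
  - assert (ERho : ex_derive rho u) by (eexists; apply rho_derive; auto).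
    assert (EPhi : ex_derive Phi (rho u)) by (eexists; apply Phi_derive).
    assert (EAh : ex_derive Ah u) by (eexists; eauto).
    assert (EDh : ex_derive Dh u) by (eexists; eauto).
    auto_derive. tauto.
    replace (Derive (fun x0 => Ah x0) u) with (- V - D u * w) by (symmetry; apply is_derive_unique; auto).
    replace (Derive (fun x0 => Dh x0) u) with (A u * w) by (symmetry; apply is_derive_unique; auto).
    replace (Derive (fun x0 => Phi x0) (rho u)) with (phi (rho u)) by (symmetry; apply is_derive_unique; apply Phi_derive).
    replace (Derive (fun x0 => rho x0) u) with (-2 * V * A u) by (symmetry; apply is_derive_unique; apply rho_derive; auto).
    rewrite (EA u (Rle_refl u)).
    replace (qf (rho u) / rr u) with (2 * phi (rho u)) by apply phi_eq. ring.
  - intros v Hv. unfold Lf. rewrite EA, ED; auto.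
Qed.


Lemma wcase_q u w : (w = 0 /\ rr u <= ra) -> qf (rho u) = 0.
Proof.
  intros [_ H]. apply qf_le. rewrite <- rr2. pose proof (rr_nonneg u). pose proof ra_pos. nra.
Qed.

Lemma w_bound u w : (w = Gf u \/ (w = 0 /\ rr u <= ra)) -> Rabs w <= 2 * k * V.
Proof.
  intros [->|[-> _]]. apply Gf_bound. rewrite Rabs_R0. pose proof k_pos. nra.
Qed.

Lemma dL1_gf u : A u * Gf u + k * V * A u * (qf (rho u) / rr u) = k * V * A u ^ 2 / rr u.
Proof. unfold Gf. unfold Rdiv. ring. Qed.

Lemma inv_rr_nonneg u : 0 <= / rr u.
Proof.
  destruct (Req_dec (rr u) 0) as [H|H]. rewrite H, Rinv_0; lra.
  pose proof (rr_nonneg u). left; apply Rinv_0_lt_compat; lra.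
Qed.

Lemma dL1_nonneg u w : (w = Gf u \/ (w = 0 /\ rr u <= ra)) ->
  0 <= A u * w + k * V * A u * (qf (rho u) / rr u).
Proof.
  intros H. destruct H as [->|H].
  - rewrite dL1_gf. unfold Rdiv. pose proof (inv_rr_nonneg u). pose proof k_pos.
    pose proof (pow2_ge_0 (A u)). assert (0 <= k * V * A u ^ 2) by (assert (0 < k*V) by nra; nra). nra.
  - rewrite (wcase_q u w H). destruct H as [-> _]. unfold Rdiv. lra.
Qed.

Lemma L1_mono s t : 1 <= s <= t -> Lf 0 s <= Lf 0 t.
Proof.
  intros Hst.
  assert (0 * (t - s) <= Lf 0 t - Lf 0 s); [|lra].
  apply ML. lra. intros u Hu. apply Lf_cont. lra.
  intros u Hu. destruct (RD_psi u ltac:(lra)) as [w [Hw Hc]].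
  destruct (RD_all u w ltac:(lra) Hw) as [_ [_ HL]].
  eexists. split. apply HL. pose proof (dL1_nonneg u w Hc). lra.
Qed.

Lemma RInt_zero_le a b f : a <= b -> ex_RInt f a b -> (forall z, a < z < b -> f z <= 0) -> RInt f a b <= 0.
Proof.
  intros Hab He Hf.
  assert (RInt f a b <= RInt (fun _ => 0) a b).
  { apply RInt_le; auto. apply ex_RInt_const. }
  rewrite RInt_const in H. unfold scal in H; simpl in H; unfold mult in H; simpl in H. lra.
Qed.

Lemma Phi_nonneg z : 0 <= Phi z.
Proof.
  unfold Phi. destruct (Rle_dec (ra ^ 2) z).
  - apply RInt_ge_0; auto. apply phi_ex. intros; apply phi_nonneg.
  - rewrite <- opp_RInt_swap by apply phi_ex. change (0 <= - RInt phi z (ra ^ 2)).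
    assert (HH : RInt phi z (ra ^ 2) <= 0).
    { apply RInt_zero_le. lra. apply phi_ex. intros y0 Hy0. unfold phi.
      rewrite qf_le by lra. unfold Rdiv. lra. }
    lra.
Qed.

Lemma phi_third z : 2 * ra ^ 2 <= z -> 1 / 3 <= phi z.
Proof.
  intros Hz. pose proof ra_pos. unfold phi. rewrite qf_ge by nra.
  rewrite pow2_sqrt by nra. replace (z - ra ^ 2 + ra ^ 2) with z by ring.
  assert (Hs : 0 < sqrt z) by (apply sqrt_lt_R0; nra).
  assert (H2 : 2 * sqrt z <= 3 * sqrt (z - ra ^ 2)).
  { rewrite <- (sqrt_pow2 2), <- (sqrt_pow2 3) by lra. rewrite <- !sqrt_mult by nra.
    apply sqrt_le_1; nra. }
  apply (Rmult_le_reg_r (2 * sqrt z)). lra.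
  replace (sqrt (z - ra ^ 2) / (2 * sqrt z) * (2 * sqrt z)) with (sqrt (z - ra ^ 2)) by (field; lra).
  lra.
Qed.

Lemma Phi_lower z : 2 * ra ^ 2 <= z -> (z - 2 * ra ^ 2) / 3 <= Phi z.
Proof.
  intros Hz. pose proof ra_pos. unfold Phi.
  rewrite <- (RInt_Chasles phi (ra ^ 2) (2 * ra ^ 2) z) by apply phi_ex.
  change ((z - 2 * ra ^ 2) / 3 <= RInt phi (ra ^ 2) (2 * ra ^ 2) + RInt phi (2 * ra ^ 2) z).
  assert (0 <= RInt phi (ra ^ 2) (2 * ra ^ 2)).
  { apply RInt_ge_0. nra. apply phi_ex. intros; apply phi_nonneg. }
  assert (RInt (fun _ => 1/3) (2 * ra ^ 2) z <= RInt phi (2 * ra ^ 2) z).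
  { apply RInt_le; auto. apply ex_RInt_const. apply phi_ex. intros y0 Hy0. apply phi_third. lra. }
  rewrite RInt_const in H1. change (scal ?a ?b) with (a * b) in H1. lra.
Qed.

Definition L0 := Lf 0 1.
Definition Rm := 1 + 3 / k + 3 * Rabs L0 / k + 2 * ra ^ 2.

Lemma Rm_pos : 1 <= Rm.
Proof.
  unfold Rm. pose proof k_pos. pose proof (Rabs_pos L0).
  assert (0 <= 3 / k) by (apply Rdiv_le_0_compat; lra).
  assert (0 <= 3 * Rabs L0 / k) by (apply Rdiv_le_0_compat; lra). nra.
Qed.

Lemma rr_bound t : 1 <= t -> rr t <= Rm.
Proof.
  intros Ht. pose proof (L1_mono 1 t ltac:(lra)) as HL. fold L0 in HL. unfold Lf in HL.
  pose proof (D_le t). apply Rabs_le_between in H.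
  pose proof k_pos. pose proof ra_pos. pose proof (rr_nonneg t) as Hr.
  pose proof (rr2 t) as Hr2. pose proof (Rle_abs L0). pose proof (Rabs_pos L0).
  assert (E1 : 3 / k * k = 3) by (field; lra).
  assert (E2 : 3 * Rabs L0 / k * k = 3 * Rabs L0) by (field; lra).
  assert (0 <= 3 / k) by (apply Rdiv_le_0_compat; lra).
  assert (0 <= 3 * Rabs L0 / k) by (apply Rdiv_le_0_compat; lra).
  unfold Rm. destruct (Rle_dec (2 * ra ^ 2) (rho t)).
  - pose proof (Phi_lower (rho t) r).
    assert (Hk2 : k * (rr t ^ 2 - 2 * ra ^ 2) <= 3 * (rr t - L0)).
    { rewrite Hr2. assert (k * ((rho t - 2 * ra ^ 2) / 3) <= k * Phi (rho t)) by (apply Rmult_le_compat_l; lra).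
      replace (k * ((rho t - 2 * ra ^ 2) / 3)) with (k * (rho t - 2 * ra ^ 2) / 3) in H7 by field. lra. }
    destruct (Rle_dec 1 (rr t)).
    + (* r^2 k <= 3 r + 3|L0| + 2 k ra^2 <= r (3 + 3|L0| + 2 k ra^2) *)
      assert (0 <= k * ra ^ 2) by nra.
      assert (2*k*ra^2 <= 2*k*ra^2*rr t) by nra.
      assert (3*Rabs L0 <= 3*Rabs L0 * rr t) by nra.
      assert (k*(rr t^2 - 2*ra^2) = k*rr t^2 - 2*k*ra^2) by ring.
      pose proof (Rle_abs (- L0)) as HL0. rewrite Rabs_Ropp in HL0.
      assert (rr t*(3+3*Rabs L0+2*k*ra^2) = 3*rr t + 3*Rabs L0*rr t + 2*k*ra^2*rr t) by ring.
      assert (k * rr t ^ 2 <= rr t * (3 + 3 * Rabs L0 + 2 * k * ra ^ 2)) by lra.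
      assert (k * rr t <= 3 + 3 * Rabs L0 + 2 * k * ra ^ 2).
      { apply (Rmult_le_reg_l (rr t)). lra. replace (rr t * (k * rr t)) with (k * rr t ^ 2) by ring. lra. }
      assert (k * (3 / k + 3 * Rabs L0 / k + 2 * ra ^ 2) = 3 + 3 * Rabs L0 + 2 * k * ra ^ 2) by (field; lra).
      assert (rr t <= 3 / k + 3 * Rabs L0 / k + 2 * ra ^ 2).
      { apply (Rmult_le_reg_l k). lra. lra. }
      lra.
    + nra.
  - destruct (Rle_dec 1 (rr t)); nra.
Qed.

Definition eta := 1 / (12 * Rm ^ 2).
Definition c2 := Rmin (k * V / (2 * Rm)) (V / (4 * Rm ^ 2)).

Lemma c2_pos : 0 < c2.
Proof.
  pose proof Rm_pos. pose proof k_pos. unfold c2. apply Rmin_glb_lt.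
  apply Rdiv_lt_0_compat; nra. apply Rdiv_lt_0_compat; nra.
Qed.

Lemma dL2_bound u w : 1 <= u -> (w = Gf u \/ (w = 0 /\ rr u <= ra)) ->
  c2 * A u ^ 2 <= A u * w + k * V * A u * (qf (rho u) / rr u) - eta * (3 * A u ^ 2 * (- V - D u * w)).
Proof.
  intros Hu Hc. pose proof Rm_pos. pose proof k_pos. pose proof (rr_bound u Hu).
  pose proof (pow2_ge_0 (A u)) as HA2.
  pose proof (Rmin_l (k * V / (2 * Rm)) (V / (4 * Rm ^ 2))).
  pose proof (Rmin_r (k * V / (2 * Rm)) (V / (4 * Rm ^ 2))). fold c2 in H2, H3.
  assert (Heta : eta * 12 * Rm ^ 2 = 1) by (unfold eta; field; lra).
  assert (Heta0 : 0 < eta) by (unfold eta; apply Rdiv_lt_0_compat; nra).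
  destruct Hc as [->|Hc].
  - rewrite dL1_gf.
    pose proof (Gf_bound u) as Hg. apply Rabs_le_between in Hg.
    pose proof (D_le u) as HD. apply Rabs_le_between in HD.
    assert (HDw : - (2 * k * V * Rm) <= D u * Gf u).
    { assert (Rabs (D u * Gf u) <= Rm * (2 * k * V)).
      { rewrite Rabs_mult. apply Rmult_le_compat. apply Rabs_pos. apply Rabs_pos.
        pose proof (D_le u); lra. apply Gf_bound. }
      apply Rabs_le_between in H4. lra. }
    assert (T1 : k * V * A u ^ 2 / Rm <= k * V * A u ^ 2 / rr u).
    { destruct (Req_dec (A u) 0) as [HA0|HA0].
      - rewrite HA0. unfold Rdiv. lra.
      - pose proof (A_le u). assert (0 < Rabs (A u)) by (apply Rabs_pos_lt; exact HA0).
        assert (0 < rr u) by lra.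
        unfold Rdiv. apply Rmult_le_compat_l. assert (0 < k * V) by nra. nra.
        apply Rinv_le_contravar; lra. }
    assert (T2 : c2 * A u ^ 2 <= k * V * A u ^ 2 / (2 * Rm)).
    { replace (k * V * A u ^ 2 / (2 * Rm)) with (k * V / (2 * Rm) * A u ^ 2) by (field; lra). nra. }
    assert (T3 : - eta * (3 * A u ^ 2 * (- V - D u * Gf u)) >= - eta * 3 * A u ^ 2 * (2 * k * V * Rm)).
    { assert (0 <= eta * 3 * A u ^ 2) by nra. nra. }
    assert (T4 : eta * 3 * A u ^ 2 * (2 * k * V * Rm) = k * V * A u ^ 2 / (2 * Rm)).
    { unfold eta. field. lra. }
    assert (T5 : k * V * A u ^ 2 / Rm = 2 * (k * V * A u ^ 2 / (2 * Rm))) by (field; lra).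
    lra.
  - rewrite (wcase_q u w Hc). destruct Hc as [-> _].
    assert (c2 * A u ^ 2 <= V / (4 * Rm ^ 2) * A u ^ 2) by nra.
    assert (V / (4 * Rm ^ 2) * A u ^ 2 = eta * (3 * A u ^ 2 * V)) by (unfold eta; field; lra).
    unfold Rdiv at 1. nra.
Qed.


Definition Bl := V + 2 * k * V * Rm.

Lemma dA_bound u w : 1 <= u -> (w = Gf u \/ (w = 0 /\ rr u <= ra)) -> Rabs (- V - D u * w) <= Bl.
Proof.
  intros Hu Hc. unfold Bl. pose proof (w_bound u w Hc). pose proof (D_le u). pose proof (rr_bound u Hu).
  assert (Rabs (D u * w) <= Rm * (2 * k * V)).
  { rewrite Rabs_mult. apply Rmult_le_compat; try apply Rabs_pos; lra. }
  pose proof (Rabs_triang (- V) (- (D u * w))). rewrite Rabs_Ropp, (Rabs_pos_eq V) in H3 by lra.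
  rewrite Rabs_Ropp in H3. replace (- V - D u * w) with (- V + - (D u * w)) by ring. lra.
Qed.

Lemma A_lip s t : 1 <= s <= t -> Rabs (A t - A s) <= Bl * (t - s).
Proof.
  intros Hst. apply Rabs_le_between. split.
  - assert ((- Bl) * (t - s) <= A t - A s); [|lra].
    apply ML. lra. intros u Hu; apply A_cont; lra.
    intros u Hu. destruct (RD_psi u ltac:(lra)) as [w [Hw Hc]].
    destruct (RD_all u w ltac:(lra) Hw) as [HA _].
    eexists; split. apply HA. pose proof (dA_bound u w ltac:(lra) Hc). apply Rabs_le_between in H. lra.
  - apply ML_up. lra. intros u Hu; apply A_cont; lra.
    intros u Hu. destruct (RD_psi u ltac:(lra)) as [w [Hw Hc]].
    destruct (RD_all u w ltac:(lra) Hw) as [HA _].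
    eexists; split. apply HA. pose proof (dA_bound u w ltac:(lra) Hc). apply Rabs_le_between in H. lra.
Qed.

Lemma L2_gain s t m : 1 <= s <= t -> (forall u, s <= u <= t -> m <= A u ^ 2) -> c2 * m * (t - s) <= Lf eta t - Lf eta s.
Proof.
  intros Hst Hm. apply ML. lra. intros u Hu; apply Lf_cont; lra.
  intros u Hu. destruct (RD_psi u ltac:(lra)) as [w [Hw Hc]].
  destruct (RD_all u w ltac:(lra) Hw) as [_ [_ HL]].
  eexists; split. apply HL. pose proof (dL2_bound u w ltac:(lra) Hc). pose proof c2_pos.
  specialize (Hm u ltac:(lra)). nra.
Qed.

Lemma L2_mono s t : 1 <= s <= t -> Lf eta s <= Lf eta t.
Proof.
  intros Hst. pose proof (L2_gain s t 0 Hst). assert (c2 * 0 * (t - s) <= Lf eta t - Lf eta s).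
  apply H. intros; apply pow2_ge_0. lra.
Qed.

Lemma L2_ub t : 1 <= t -> Lf eta t <= Rm + eta * Rm ^ 3.
Proof.
  intros Ht. unfold Lf. pose proof (D_le t). pose proof (A_le t). pose proof (rr_bound t Ht).
  pose proof (Phi_nonneg (rho t)). pose proof k_pos. apply Rabs_le_between in H.
  assert (Heta0 : 0 < eta) by (unfold eta; pose proof Rm_pos; apply Rdiv_lt_0_compat; nra).
  assert (- A t ^ 3 <= Rm ^ 3).
  { assert (Rabs (A t) ^ 3 <= Rm ^ 3) by (apply pow_incr; split; [apply Rabs_pos| lra]).
    rewrite RPow_abs in H4. pose proof (Rle_abs (- A t ^ 3)). rewrite Rabs_Ropp in H5. lra. }
  assert (0 <= k * Phi (rho t)) by nra. nra.
Qed.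

Lemma Bl_pos : 0 < Bl.
Proof. unfold Bl. pose proof k_pos. pose proof Rm_pos. assert (0 < k * V) by nra. nra. Qed.

Lemma A_to_0 e : 0 < e -> exists T, 1 <= T /\ forall t, T <= t -> Rabs (A t) <= e.
Proof.
  intros He.
  set (E := fun z => exists t, 1 <= t /\ z = Lf eta t).
  assert (HB : bound E). { exists (Rm + eta * Rm ^ 3). intros z [t [Ht ->]]. apply L2_ub; auto. }
  assert (HE : exists z, E z) by (exists (Lf eta 1); exists 1; split; lra).
  destruct (completeness E HB HE) as [S [Hub Hlub]].
  pose proof Bl_pos. pose proof c2_pos.
  set (tau := e / (2 * Bl)).
  assert (Htau : 0 < tau) by (unfold tau; apply Rdiv_lt_0_compat; lra).
  set (gam := c2 * (e ^ 2 / 4) * tau).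
  assert (Hgam : 0 < gam) by (unfold gam; assert (0 < e^2/4) by nra; assert (0 < c2 * (e^2/4)) by nra; nra).
  assert (HT : exists T, 1 <= T /\ S - gam < Lf eta T).
  { apply NNPP. intros Hn. assert (S <= S - gam); [|lra]. apply Hlub. intros z [t [Ht ->]].
    apply Rnot_lt_le. intros Hlt. apply Hn. exists t. split; auto. }
  destruct HT as [T [HT1 HT2]]. exists T. split; auto.
  intros t Ht. apply Rnot_lt_le. intros Hlt.
  assert (Hg : c2 * (e ^ 2 / 4) * (t + tau - t) <= Lf eta (t + tau) - Lf eta t).
  { apply L2_gain. lra. intros u Hu. pose proof (A_lip t u ltac:(lra)) as Hl.
    assert (Hb : Bl * (u - t) <= e / 2).
    { assert (Bl * tau = e / 2) by (unfold tau; field; lra). nra. }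
    assert (Hau : e / 2 <= Rabs (A u)).
    { pose proof (Rabs_triang_inv (A t) (A u)) as Ht2. rewrite Rabs_minus_sym in Hl. lra. }
    rewrite <- (pow2_abs (A u)). nra. }
  replace (t + tau - t) with tau in Hg by ring. fold gam in Hg.
  pose proof (L2_mono T t ltac:(lra)) as Hm.
  assert (HEl : E (Lf eta (t + tau))) by (exists (t + tau); split; [lra|auto]).
  specialize (Hub _ HEl). lra.
Qed.


Lemma sqrt_holder a b : 0 <= a -> 0 <= b -> Rabs (sqrt a - sqrt b) <= sqrt (Rabs (a - b)).
Proof.
  intros Ha Hb.
  assert (W : forall a b, 0 <= b <= a -> sqrt a - sqrt b <= sqrt (a - b)).
  { intros a0 b0 [H0 H1].
    pose proof (sqrt_pos b0). pose proof (sqrt_pos (a0 - b0)).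
    assert (sqrt a0 <= sqrt b0 + sqrt (a0 - b0)); [|lra].
    rewrite <- (sqrt_pow2 (sqrt b0 + sqrt (a0 - b0))) by lra. apply sqrt_le_1. lra. nra.
    replace ((sqrt b0 + sqrt (a0 - b0)) ^ 2) with (sqrt b0 ^ 2 + sqrt (a0 - b0) ^ 2 + 2 * sqrt b0 * sqrt (a0 - b0)) by ring.
    rewrite !pow2_sqrt by lra. nra. }
  destruct (Rle_dec b a).
  - rewrite (Rabs_pos_eq (a - b)) by lra.
    assert (sqrt b <= sqrt a) by (apply sqrt_le_1; lra).
    rewrite Rabs_pos_eq by lra. apply W; lra.
  - rewrite (Rabs_left (a - b)) by lra.
    assert (sqrt a <= sqrt b) by (apply sqrt_le_1; lra).
    rewrite Rabs_left1 by lra. replace (- (a - b)) with (b - a) by ring.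
    replace (- (sqrt a - sqrt b)) with (sqrt b - sqrt a) by ring. apply W; lra.
Qed.

Lemma qf_holder a b : Rabs (qf a - qf b) <= sqrt (Rabs (a - b)).
Proof.
  unfold qf.
  assert (Hm : forall z, 0 <= (z - ra ^ 2 + Rabs (z - ra ^ 2)) / 2).
  { intros z. pose proof (Rle_abs (- (z - ra ^ 2))). rewrite Rabs_Ropp in H. lra. }
  eapply Rle_trans. apply sqrt_holder; apply Hm.
  apply sqrt_le_1. apply Rabs_pos. apply Rabs_pos.
  destruct (Rle_dec (ra ^ 2) a); destruct (Rle_dec (ra ^ 2) b).
  - rewrite (Rabs_pos_eq (a - ra^2)), (Rabs_pos_eq (b - ra^2)) by lra.
    replace ((a - ra ^ 2 + (a - ra ^ 2)) / 2 - (b - ra ^ 2 + (b - ra ^ 2)) / 2) with (a - b) by field. lra.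
  - rewrite (Rabs_pos_eq (a - ra^2)), (Rabs_left (b - ra^2)) by lra.
    replace ((a - ra ^ 2 + (a - ra ^ 2)) / 2 - (b - ra ^ 2 + - (b - ra ^ 2)) / 2) with (a - ra ^ 2) by field.
    rewrite !Rabs_pos_eq; lra.
  - rewrite (Rabs_left (a - ra^2)), (Rabs_pos_eq (b - ra^2)) by lra.
    replace ((a - ra ^ 2 + - (a - ra ^ 2)) / 2 - (b - ra ^ 2 + (b - ra ^ 2)) / 2) with (- (b - ra ^ 2)) by field.
    rewrite Rabs_Ropp, (Rabs_pos_eq (b - ra^2)) by lra. rewrite (Rabs_left (a - b)) by lra. lra.
  - rewrite (Rabs_left (a - ra^2)), (Rabs_left (b - ra^2)) by lra.
    replace ((a - ra ^ 2 + - (a - ra ^ 2)) / 2 - (b - ra ^ 2 + - (b - ra ^ 2)) / 2) with 0 by field.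
    rewrite Rabs_R0. apply Rabs_pos.
Qed.

Definition sfun d := if Rle_dec 0 d then qf (d ^ 2) else - qf (d ^ 2).

Lemma sfun_small d : d ^ 2 <= ra ^ 2 -> sfun d = 0.
Proof. intros H. unfold sfun. rewrite qf_le by auto. destruct (Rle_dec 0 d); lra. Qed.

Lemma sfun_holder d1 d2 : Rabs (d1 - d2) <= ra -> Rabs (sfun d1 - sfun d2) <= sqrt (Rabs (d1 ^ 2 - d2 ^ 2)).
Proof.
  intros H. pose proof ra_pos. apply Rabs_le_between in H.
  unfold sfun. destruct (Rle_dec 0 d1); destruct (Rle_dec 0 d2).
  - apply qf_holder.
  - rewrite !qf_le by nra. rewrite Ropp_0, Rminus_0_r, Rabs_R0. apply sqrt_pos.
  - rewrite !qf_le by nra. rewrite Ropp_0, Rminus_0_r, Rabs_R0. apply sqrt_pos.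
  - replace (- qf (d1 ^ 2) - - qf (d2 ^ 2)) with (- (qf (d1 ^ 2) - qf (d2 ^ 2))) by ring.
    rewrite Rabs_Ropp. apply qf_holder.
Qed.

Lemma keyalg r s a q q2 : 0 < r -> 0 <= s <= r -> r ^ 2 = a ^ 2 + s ^ 2 ->
  Rabs (q - q2) <= Rabs a -> 0 <= q2 <= s -> Rabs (s * q / r - q2) <= 2 * Rabs a.
Proof.
  intros Hr Hs Hrs Hq Hq2.
  assert (Hsr : 0 <= s / r <= 1).
  { split. apply Rdiv_le_0_compat; lra. apply (Rmult_le_reg_r r); auto.
    unfold Rdiv; rewrite Rmult_assoc, Rinv_l by lra; lra. }
  replace (s * q / r - q2) with (s / r * (q - q2) + (s / r - 1) * q2) by (field; lra).
  pose proof (Rabs_pos a).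
  assert (T1 : Rabs (s / r * (q - q2)) <= Rabs a).
  { rewrite Rabs_mult, (Rabs_pos_eq (s / r)) by lra. nra. }
  assert (Hra : r - s <= Rabs a).
  { assert (Rabs a ^ 2 = a ^ 2) by apply pow2_abs.
    assert (Rabs a <= r) by (rewrite <- (Rabs_pos_eq r) by lra; apply Rsqr_le_abs_0; unfold Rsqr; nra).
    nra. }
  assert (T2 : Rabs ((s / r - 1) * q2) <= Rabs a).
  { rewrite Rabs_mult, (Rabs_left1 (s / r - 1)) by lra. rewrite (Rabs_pos_eq q2) by lra.
    assert (- (s / r - 1) * q2 <= - (s / r - 1) * s) by nra.
    assert (- (s / r - 1) * s = s * (r - s) / r) by (field; lra).
    assert (s * (r - s) / r <= r - s).
    { apply (Rmult_le_reg_r r); auto. replace (s * (r - s) / r * r) with (s * (r - s)) by (field; lra). nra. }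
    lra. }
  pose proof (Rabs_triang (s / r * (q - q2)) ((s / r - 1) * q2)). lra.
Qed.

Lemma key_AD u w : (w = Gf u \/ (w = 0 /\ rr u <= ra)) ->
  Rabs (D u * w + k * V * sfun (D u)) <= 3 * k * V * Rabs (A u).
Proof.
  intros Hc. pose proof k_pos. pose proof ra_pos. assert (HkV : 0 < k * V) by nra.
  pose proof (rho_AD u) as HAD. pose proof (rr2 u) as Hr2. pose proof (rr_nonneg u).
  destruct Hc as [->|[-> Hr]].
  - destruct (Req_dec (rr u) 0) as [Hr0|Hr0].
    + assert (A u = 0 /\ D u = 0) as [HA HD].
      { pose proof (A_le u). pose proof (D_le u). rewrite Hr0 in *.
        split; apply Rabs_eq_0; pose proof (Rabs_pos (A u)); pose proof (Rabs_pos (D u)); lra. }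
      rewrite HD, sfun_small by nra. rewrite HA, Rabs_R0. rewrite Rmult_0_l, Rmult_0_r, Rplus_0_r, Rabs_R0. lra.
    + assert (Hr : 0 < rr u) by lra.
      set (s := Rabs (D u)).
      assert (Hs : 0 <= s <= rr u) by (split; [apply Rabs_pos| apply D_le]).
      assert (Hss : s ^ 2 = D u ^ 2) by (unfold s; apply pow2_abs).
      assert (Hq : Rabs (qf (rho u) - qf (s ^ 2)) <= Rabs (A u)).
      { eapply Rle_trans. apply qf_holder. rewrite HAD, Hss.
        replace (A u ^ 2 + D u ^ 2 - D u ^ 2) with (A u ^ 2) by ring.
        rewrite (Rabs_pos_eq (A u ^ 2)) by apply pow2_ge_0. rewrite <- (pow2_abs (A u)), sqrt_pow2 by apply Rabs_pos. lra. }
      assert (Hq2 : 0 <= qf (s ^ 2) <= s).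
      { split. apply qf_nonneg. eapply Rle_trans. apply qf_le_sqrt. nra. rewrite sqrt_pow2; lra. }
      pose proof (keyalg (rr u) s (A u) (qf (rho u)) (qf (s ^ 2)) Hr Hs ltac:(rewrite Hss; nra) Hq Hq2) as HK.
      assert (E1 : Rabs (D u * A u / rr u) <= Rabs (A u)).
      { unfold Rdiv. rewrite !Rabs_mult, Rabs_inv, (Rabs_pos_eq (rr u)) by lra.
        pose proof (D_le u). pose proof (Rabs_pos (A u)).
        replace (Rabs (D u) * Rabs (A u) * / rr u) with (Rabs (A u) * (Rabs (D u) / rr u)) by (field; lra).
        assert (Rabs (D u) / rr u <= 1).
        { apply (Rmult_le_reg_r (rr u)); auto. unfold Rdiv; rewrite Rmult_assoc, Rinv_l by lra; lra. }
        assert (0 <= Rabs (D u) / rr u) by (apply Rdiv_le_0_compat; [apply Rabs_pos|lra]). nra. }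
      assert (E2 : Rabs (D u * qf (rho u) / rr u - sfun (D u)) <= 2 * Rabs (A u)).
      { unfold sfun. rewrite Hss in HK. unfold s in *. destruct (Rle_dec 0 (D u)).
        - rewrite (Rabs_pos_eq (D u)) in HK by lra. exact HK.
        - rewrite (Rabs_left (D u)) in HK by lra.
          replace (D u * qf (rho u) / rr u - - qf (D u ^ 2)) with (- (- D u * qf (rho u) / rr u - qf (D u ^ 2))) by (field; lra).
          rewrite Rabs_Ropp. exact HK. }
      unfold Gf.
      replace (D u * (k * V * (A u - qf (rho u)) / rr u) + k * V * sfun (D u))
        with (k * V * (D u * A u / rr u - (D u * qf (rho u) / rr u - sfun (D u)))) by (field; lra).
      rewrite Rabs_mult, (Rabs_pos_eq (k * V)) by lra.
      pose proof (Rabs_triang (D u * A u / rr u) (- (D u * qf (rho u) / rr u - sfun (D u)))).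
      rewrite Rabs_Ropp in H2.
      replace (D u * A u / rr u - (D u * qf (rho u) / rr u - sfun (D u))) with (D u * A u / rr u + - (D u * qf (rho u) / rr u - sfun (D u))) by ring.
      assert (Rabs (D u * A u / rr u + - (D u * qf (rho u) / rr u - sfun (D u))) <= 3 * Rabs (A u)) by lra.
      nra.
  - rewrite sfun_small. rewrite Rmult_0_r, Rmult_0_r, Rplus_0_r, Rabs_R0.
    pose proof (Rabs_pos (A u)). nra.
    nra.
Qed.


Lemma D_drift t v d : 1 <= t <= v -> (forall u, t <= u <= v -> Rabs (A u) <= d) ->
  Rabs (D v - D t) <= 2 * k * V * d * (v - t).
Proof.
  intros Htv Hd. pose proof k_pos.
  assert (HB : forall u, t <= u < v -> exists l, RD D u l /\ Rabs l <= 2 * k * V * d).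
  { intros u Hu. destruct (RD_psi u ltac:(lra)) as [w [Hw Hc]].
    destruct (RD_all u w ltac:(lra) Hw) as [_ [HD _]].
    exists (A u * w). split; auto. rewrite Rabs_mult.
    pose proof (w_bound u w Hc). specialize (Hd u ltac:(lra)).
    replace (2 * k * V * d) with (d * (2 * k * V)) by ring.
    apply Rmult_le_compat; auto; apply Rabs_pos. }
  apply Rabs_le_between. split.
  - assert (- (2 * k * V * d) * (v - t) <= D v - D t); [|lra].
    apply ML. lra. intros u Hu; apply D_cont; lra.
    intros u Hu. destruct (HB u Hu) as [l [Hl Hb]]. exists l. split; auto.
    apply Rabs_le_between in Hb. lra.
  - apply ML_up. lra. intros u Hu; apply D_cont; lra.
    intros u Hu. destruct (HB u Hu) as [l [Hl Hb]]. exists l. split; auto.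
    apply Rabs_le_between in Hb. lra.
Qed.

Definition Gam t := - V + k * V * sfun (D t).

Lemma Gam_to_0 e : 0 < e -> exists T, 1 <= T /\ forall t, T <= t -> Rabs (Gam t) <= e.
Proof.
  intros He. pose proof k_pos. pose proof Rm_pos. pose proof ra_pos.
  assert (HkV : 0 < k * V) by nra.
  set (d := Rmin (Rmin (e/8) (e/(12 * (k * V)))) (Rmin (ra/(2 * (k * V))) ((e/(4 * (k * V)))^2/(4 * (k * V) * Rm)))).
  assert (Hd : 0 < d).
  { unfold d. repeat apply Rmin_glb_lt; apply Rdiv_lt_0_compat; try nra.
    assert (0 < e / (4 * (k * V))) by (apply Rdiv_lt_0_compat; nra). nra. }
  assert (Hd1 : d <= e / 8) by (unfold d; eapply Rle_trans; [apply Rmin_l|apply Rmin_l]).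
  assert (Hd2 : d <= e / (12 * (k * V))) by (unfold d; eapply Rle_trans; [apply Rmin_l|apply Rmin_r]).
  assert (Hd3 : d <= ra / (2 * (k * V))) by (unfold d; eapply Rle_trans; [apply Rmin_r|apply Rmin_l]).
  assert (Hd4 : d <= (e/(4 * (k * V)))^2/(4 * (k * V) * Rm)) by (unfold d; eapply Rle_trans; [apply Rmin_r|apply Rmin_r]).
  destruct (A_to_0 d Hd) as [T [HT HA]].
  exists T. split; auto. intros t Ht.
  apply Rnot_lt_le. intros Hlt.
  assert (Hdr : forall v, t <= v <= t + 1 -> Rabs (D v - D t) <= 2 * (k * V) * d).
  { intros v Hv. pose proof (D_drift t v d ltac:(lra) ltac:(intros u Hu; apply HA; lra)).
    assert (2 * k * V * d * (v - t) <= 2 * (k * V) * d * 1).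
    { assert (0 <= 2 * k * V * d) by nra. nra. }
    lra. }
  assert (HG : forall v, t <= v <= t + 1 -> Rabs (Gam v - Gam t) <= e / 4).
  { intros v Hv. specialize (Hdr v Hv).
    assert (Hra' : Rabs (D v - D t) <= ra).
    { assert (2 * (k * V) * d <= ra).
      { replace ra with (2 * (k * V) * (ra / (2 * (k * V)))) by (field; lra). nra. }
      lra. }
    pose proof (sfun_holder (D v) (D t) Hra') as Hs.
    assert (Hsq : Rabs (D v ^ 2 - D t ^ 2) <= 4 * (k * V) * Rm * d).
    { replace (D v ^ 2 - D t ^ 2) with ((D v - D t) * (D v + D t)) by ring.
      rewrite Rabs_mult. pose proof (D_le v). pose proof (D_le t).
      pose proof (rr_bound v ltac:(lra)). pose proof (rr_bound t ltac:(lra)).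
      pose proof (Rabs_triang (D v) (D t)).
      assert (Rabs (D v + D t) <= 2 * Rm) by lra.
      replace (4 * (k * V) * Rm * d) with ((2 * (k * V) * d) * (2 * Rm)) by ring.
      apply Rmult_le_compat; auto; apply Rabs_pos. }
    assert (Hsq2 : sqrt (Rabs (D v ^ 2 - D t ^ 2)) <= e / (4 * (k * V))).
    { rewrite <- (sqrt_pow2 (e / (4 * (k * V)))) by (left; apply Rdiv_lt_0_compat; nra).
      apply sqrt_le_1. apply Rabs_pos. apply pow2_ge_0.
      assert (4 * (k * V) * Rm * d <= (e / (4 * (k * V))) ^ 2).
      { assert (0 < 4 * (k * V) * Rm) by nra.
        replace ((e / (4 * (k * V))) ^ 2) with (4 * (k * V) * Rm * ((e / (4 * (k * V))) ^ 2 / (4 * (k * V) * Rm))) by (field; nra).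
        apply Rmult_le_compat_l; lra. }
      lra. }
    unfold Gam. replace (- V + k * V * sfun (D v) - (- V + k * V * sfun (D t))) with (k * V * (sfun (D v) - sfun (D t))) by ring.
    rewrite Rabs_mult, (Rabs_pos_eq (k * V)) by lra.
    assert (HH : k * V * Rabs (sfun (D v) - sfun (D t)) <= k * V * (e / (4 * (k * V)))).
    { apply Rmult_le_compat_l; lra. }
    replace (k * V * (e / (4 * (k * V)))) with (e / 4) in HH by (field; lra). lra. }
  assert (HR : forall u, t <= u < t + 1 -> exists l, RD A u l /\ Rabs (l - Gam u) <= e / 4).
  { intros u Hu. destruct (RD_psi u ltac:(lra)) as [w [Hw Hc]].
    destruct (RD_all u w ltac:(lra) Hw) as [HAr _].
    exists (- V - D u * w). split; auto.
    pose proof (key_AD u w Hc). unfold Gam.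
    replace (- V - D u * w - (- V + k * V * sfun (D u))) with (- (D u * w + k * V * sfun (D u))) by ring.
    rewrite Rabs_Ropp. specialize (HA u ltac:(lra)).
    assert (3 * k * V * Rabs (A u) <= 3 * k * V * d) by (apply Rmult_le_compat_l; nra).
    assert (3 * k * V * d <= e / 4).
    { replace (e / 4) with (3 * k * V * (e / (12 * (k * V)))) by (field; lra). apply Rmult_le_compat_l; nra. }
    lra. }
  pose proof (HA t ltac:(lra)) as HAt. pose proof (HA (t + 1) ltac:(lra)) as HAt1.
  apply Rabs_le_between in HAt. apply Rabs_le_between in HAt1.
  destruct (Rle_dec 0 (Gam t)).
  - rewrite Rabs_pos_eq in Hlt by lra.
    assert ((e / 2) * (t + 1 - t) <= A (t + 1) - A t); [|lra].
    apply ML. lra. intros u Hu; apply A_cont; lra.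
    intros u Hu. destruct (HR u Hu) as [l [Hl Hb]]. exists l. split; auto.
    specialize (HG u ltac:(lra)). apply Rabs_le_between in Hb. apply Rabs_le_between in HG. lra.
  - rewrite Rabs_left in Hlt by lra.
    assert (A (t + 1) - A t <= (- (e / 2)) * (t + 1 - t)); [|lra].
    apply ML_up. lra. intros u Hu; apply A_cont; lra.
    intros u Hu. destruct (HR u Hu) as [l [Hl Hb]]. exists l. split; auto.
    specialize (HG u ltac:(lra)). apply Rabs_le_between in Hb. apply Rabs_le_between in HG. lra.
Qed.


Lemma conv e : 0 < e -> exists T, forall t, T <= t -> Rabs (rr t - rd) <= e /\ Rabs (A t) <= e /\ 0 < D t.
Proof.
  intros He. pose proof k_pos. pose proof ra_pos. assert (HkV : 0 < k * V) by nra.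
  set (e2 := Rmin e (Rmin 1 (e * rd / 2))).
  assert (He2 : 0 < e2) by (unfold e2; repeat apply Rmin_glb_lt; nra).
  assert (He2a : e2 <= e) by apply Rmin_l.
  assert (He2b : e2 <= 1) by (unfold e2; eapply Rle_trans; [apply Rmin_r|apply Rmin_l]).
  assert (He2c : e2 <= e * rd / 2) by (unfold e2; eapply Rle_trans; [apply Rmin_r|apply Rmin_r]).
  set (d1 := Rmin (1 / (2 * k)) (e * rd * k / 6)).
  assert (Hd1 : 0 < d1) by (unfold d1; apply Rmin_glb_lt; [apply Rdiv_lt_0_compat|]; nra).
  assert (Hd1a : d1 <= 1 / (2 * k)) by apply Rmin_l.
  assert (Hd1b : d1 <= e * rd * k / 6) by apply Rmin_r.
  destruct (A_to_0 e2 He2) as [T1 [HT1 HA]].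
  destruct (Gam_to_0 (k * V * d1) ltac:(nra)) as [T2 [HT2 HG]].
  exists (Rmax T1 T2). intros t Ht.
  pose proof (Rmax_l T1 T2). pose proof (Rmax_r T1 T2).
  specialize (HA t ltac:(lra)). specialize (HG t ltac:(lra)).
  assert (Hs : Rabs (sfun (D t) - 1 / k) <= d1).
  { unfold Gam in HG. replace (- V + k * V * sfun (D t)) with (k * V * (sfun (D t) - 1 / k)) in HG by (field; lra).
    rewrite Rabs_mult, (Rabs_pos_eq (k * V)) in HG by lra.
    apply (Rmult_le_reg_l (k * V)); auto. }
  apply Rabs_le_between in Hs.
  assert (Hk2 : 1 / (2 * k) = (1 / k) / 2) by (field; lra).
  assert (Hpos : 0 < sfun (D t)).
  { assert (0 < 1 / k) by (apply Rdiv_lt_0_compat; lra). lra. }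
  assert (HD : 0 <= D t /\ qf (D t ^ 2) = sfun (D t)).
  { unfold sfun in *. destruct (Rle_dec 0 (D t)). split; auto. pose proof (qf_nonneg (D t ^ 2)). lra. }
  destruct HD as [HD0 HDq].
  assert (HDra : ra ^ 2 < D t ^ 2).
  { apply Rnot_le_lt. intros Hle. rewrite qf_le in HDq by auto. lra. }
  rewrite qf_ge in HDq by lra.
  assert (HD2 : D t ^ 2 - ra ^ 2 = sfun (D t) ^ 2) by (rewrite <- HDq; rewrite pow2_sqrt; lra).
  assert (HDrd : Rabs (D t ^ 2 - rd ^ 2) <= e * rd / 2).
  { replace (D t ^ 2 - rd ^ 2) with ((sfun (D t) - 1 / k) * (sfun (D t) + 1 / k)).
    2:{ pose proof ra2 as H3. replace (1 / k ^ 2) with ((1 / k) ^ 2) in H3 by (field; lra).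
        replace ((sfun (D t) - 1 / k) * (sfun (D t) + 1 / k)) with (sfun (D t) ^ 2 - (1 / k) ^ 2) by ring.
        rewrite <- HD2. lra. }
    rewrite Rabs_mult. rewrite (Rabs_pos_eq (sfun (D t) + 1 / k)) by lra.
    assert (Rabs (sfun (D t) - 1 / k) <= d1) by (apply Rabs_le_between; lra).
    assert (sfun (D t) + 1 / k <= 3 / k).
    { assert (1 / k + 1 / (2 * k) + 1 / k <= 3 / k); [|lra].
      replace (3 / k) with (1 / k + 1 / (2 * k) + 1 / k + 1 / (2 * k)) by (field; lra).
      assert (0 < 1 / (2 * k)) by (apply Rdiv_lt_0_compat; lra). lra. }
    assert (Rabs (sfun (D t) - 1 / k) * (sfun (D t) + 1 / k) <= d1 * (3 / k)).
    { apply Rmult_le_compat; try lra. apply Rabs_pos. }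
    assert (d1 * (3 / k) <= e * rd * k / 6 * (3 / k)).
    { apply Rmult_le_compat_r. left; apply Rdiv_lt_0_compat; lra. lra. }
    replace (e * rd * k / 6 * (3 / k)) with (e * rd / 2) in H6 by (field; lra). lra. }
  split; [|split; [lra|]].
  - pose proof (rr2 t). rewrite rho_AD in H3. pose proof (rr_nonneg t).
    assert (HA2 : A t ^ 2 <= e * rd / 2).
    { rewrite <- pow2_abs. assert (Rabs (A t) <= 1) by lra. pose proof (Rabs_pos (A t)). nra. }
    assert (Hrr : Rabs (rr t ^ 2 - rd ^ 2) <= e * rd).
    { rewrite H3. replace (A t ^ 2 + D t ^ 2 - rd ^ 2) with (A t ^ 2 + (D t ^ 2 - rd ^ 2)) by ring.
      eapply Rle_trans. apply Rabs_triang. rewrite Rabs_pos_eq by apply pow2_ge_0. lra. }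
    replace (rr t ^ 2 - rd ^ 2) with ((rr t - rd) * (rr t + rd)) in Hrr by ring.
    rewrite Rabs_mult, (Rabs_pos_eq (rr t + rd)) in Hrr by lra.
    assert (Rabs (rr t - rd) * rd <= e * rd).
    { eapply Rle_trans; [|exact Hrr]. apply Rmult_le_compat_l. apply Rabs_pos. lra. }
    apply (Rmult_le_reg_r rd); auto.
  - assert (D t <> 0) by (intro H3; rewrite H3 in HDra; nra). lra.
Qed.

Lemma main_result :
  is_lim (fun t => dist_to_target xT yT (x t) (y t)) p_infty rd /\
  is_lim (fun t => bearing xT yT (x t) (y t) (psi t)) p_infty (PI / 2).
Proof.
  split.
  - apply is_lim_spec. intros eps. destruct (conv (eps / 2) ltac:(pose proof (cond_pos eps); lra)) as [T HT].
    exists T. intros t Ht. destruct (HT t ltac:(lra)) as [H1 _]. fold (rr t).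
    pose proof (cond_pos eps). lra.
  - apply is_lim_spec. intros eps.
    assert (Hc : continuity_pt acos 0) by (apply derivable_continuous_pt, derivable_pt_acos; lra).
    destruct (cont_eps acos 0 Hc eps (cond_pos eps)) as [da [Hda Hacos]].
    set (e := Rmin (rd / 2) (da * rd / 4)).
    assert (He : 0 < e) by (unfold e; apply Rmin_glb_lt; nra).
    assert (He1 : e <= rd / 2) by apply Rmin_l.
    assert (He2 : e <= da * rd / 4) by apply Rmin_r.
    destruct (conv e He) as [T HT]. exists T. intros t Ht.
    destruct (HT t ltac:(lra)) as [H1 [H2 H3]].
    apply Rabs_le_between in H1.
    assert (Hr : rd / 2 <= rr t) by lra.
    unfold bearing. cbv zeta.
    change (dist_to_target xT yT (x t) (y t)) with (rr t).
    change ((xT - x t) * cos (psi t) + (yT - y t) * sin (psi t)) with (A t).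
    change ((xT - x t) * sin (psi t) - (yT - y t) * cos (psi t)) with (D t).
    destruct (Rle_dec 0 (D t / rr t)) as [_|Hn].
    2:{ exfalso. apply Hn. left. apply Rdiv_lt_0_compat; lra. }
    rewrite <- acos_0.
    apply Hacos. rewrite Rminus_0_r.
    unfold Rdiv. rewrite Rabs_mult, Rabs_inv, (Rabs_pos_eq (rr t)) by lra.
    assert (/ rr t <= 2 / rd).
    { replace (2 / rd) with (/ (rd / 2)) by (field; lra). apply Rinv_le_contravar; lra. }
    assert (Rabs (A t) * / rr t <= e * (2 / rd)).
    { apply Rmult_le_compat; auto. apply Rabs_pos. left; apply Rinv_0_lt_compat; lra. }
    assert (e * (2 / rd) <= da * rd / 4 * (2 / rd)).
    { apply Rmult_le_compat_r. left; apply Rdiv_lt_0_compat; lra. lra. }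
    replace (da * rd / 4 * (2 / rd)) with (da / 2) in H4 by (field; lra). lra.
Qed.

End Main.

Theorem theorem1 (xT yT V rd k : R) (x y psi : R -> R) :
  0 < V -> 0 < rd -> 1 / rd < k ->
  (forall t, 0 < t -> is_derive x t (V * cos (psi t))) ->
  (forall t, 0 < t -> is_derive y t (V * sin (psi t))) ->
  (forall t, 0 <= t ->
     is_RInt (fun s => control V k rd (dist_to_target xT yT (x s) (y s))
                         (Derive (fun u => dist_to_target xT yT (x u) (y u)) s))
             0 t (psi t - psi 0)) ->
  is_lim (fun t => dist_to_target xT yT (x t) (y t)) p_infty rd /\
  is_lim (fun t => bearing xT yT (x t) (y t) (psi t)) p_infty (PI / 2).
Proof.
  intros. eapply (main_result xT yT V rd k x y psi); eauto.
Qed.
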